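(* Let $(A,\succ,\prec)$ be a finite-dimensional dendriform algebra with associated product $*$, and let $r\in A\otimes A$ be a symmetric solution of the $D$-equation $r_{12}*r_{13}=r_{13}\prec r_{23}+r_{23}\succ r_{12}$. Let $T_r$ be $A\oplus A^*$ with the product $x\star y=x*y$, $a^*\star b^*=R_\prec^*(r(a^* ))b^*+L_\succ^*(r(b^* ))a^*$, $x\star a^*=x*r(a^* )-r(R_\prec^*(x)a^* )+R_\prec^*(x)a^*$, $a^*\star x=r(a^* )*x-r(L_\succ^*(x)a^* )+L_\succ^*(x)a^*$ ($x,y\in A$, $a^*,b^*\in A^*$), and let $A\ltimes_{R_\prec^*,L_\succ^*}A^*$ be $A\oplus A^*$ with product $(x+a^* )(y+b^* )=x*y+R_\prec^*(x)b^*+L_\succ^*(y)a^*$. Let $\omega(x+a^*,y+b^* )=-\langle x,b^*\rangle+\langle a^*,y\rangle$. Then both are associative algebras on which $\omega$ is a Connes cocycle, and there exists an isomorphism of associative algebras $\varphi:A\ltimes_{R_\prec^*,L_\succ^*}A^*\to T_r$ with $\omega(\varphi(u),\varphi(v))=\omega(u,v)$ for all $u,v$.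
   Context: A dendriform algebra is a vector space with bilinear products $\prec,\succ$ such that, writing $x*y=x\prec y+x\succ y$: $(x\prec y)\prec z=x\prec(y*z)$, $(x\succ y)\prec z=x\succ(y\prec z)$, $x\succ(y\succ z)=(x*y)\succ z$. $\langle L_\succ^*(x)a^*,y\rangle=\langle a^*,x\succ y\rangle$, $\langle R_\prec^*(x)a^*,y\rangle=\langle a^*,y\prec x\rangle$. Symmetric: $\sigma(r)=r$, $\sigma(u\otimes v)=v\otimes u$. $r$ is regarded as a map $A^*\to A$ by $\langle u^*\otimes v^*,r\rangle=\langle u^*,r(v^* )\rangle$. For $r=\sum_i x_i\otimes y_i$: $r_{12}*r_{13}=\sum_{i,j}x_i*x_j\otimes y_i\otimes y_j$, $r_{13}\prec r_{23}=\sum_{i,j}x_i\otimes x_j\otimes y_i\prec y_j$, $r_{23}\succ r_{12}=\sum_{i,j}x_j\otimes x_i\succ y_j\otimes y_i$. A Connes cocycle on an associative algebra is an antisymmetric bilinear form $\omega$ with $\omega(uv,w)+\omega(vw,u)+\omega(wu,v)=0$. *)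

(* Defs.v *)
From HB Require Import structures.
From mathcomp Require Import all_boot all_order all_algebra.
Set Implicit Arguments. Unset Strict Implicit. Unset Printing Implicit Defensive.
Import GRing.Theory.
Local Open Scope ring_scope.

(* Conventions: A = K^n realised as row vectors 'rV[K]_n with standard basis
   e_i = delta_mx 0 i; A^dual also realised as 'rV[K]_n, paired with A by
   <a, x> = \sum_i a_i x_i (dual basis).  A bilinear product on A is given by
   its structure constants c : 'I_n -> 'I_n -> 'rV_n (covers every bilinear map). *)

Section Dend.
Variables (K : fieldType) (n : nat).
Notation V := 'rV[K]_n.

Definition bvec (i : 'I_n) : V := delta_mx 0 i.

Definition bil (c : 'I_n -> 'I_n -> V) (x y : V) : V :=
  \sum_(i < n) \sum_(j < n) (x 0 i * y 0 j) *: c i j.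

Definition pair_d (a x : V) : K := \sum_(i < n) a 0 i * x 0 i.

Definition dendriform (prec succ : V -> V -> V) : Prop :=
  forall x y z : V,
    [/\ prec (prec x y) z = prec x (prec y z + succ y z),
        prec (succ x y) z = succ x (prec y z) &
        succ x (succ y z) = succ (prec x y + succ x y) z].

(* <L_succ^dual(x) a, y> = <a, x succ y> ;  <R_prec^dual(x) a, y> = <a, y prec x> *)
Definition Lstar (succ : V -> V -> V) (x a : V) : V :=
  \row_(j < n) pair_d a (succ x (bvec j)).
Definition Rstar (prec : V -> V -> V) (x a : V) : V :=
  \row_(j < n) pair_d a (prec (bvec j) x).

(* r \in A (x) A as a coefficient matrix: r = \sum_{i,j} r i j e_i (x) e_j *)
Definition symmetric_tensor (r : 'M[K]_n) : Prop := r^T = r.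

(* r as a map A^dual -> A : <u^dual, r(v^dual)> = <u^dual (x) v^dual, r> *)
Definition rmap (r : 'M[K]_n) (v : V) : V :=
  \row_(i < n) \sum_(j < n) r i j * v 0 j.

Definition t3 (x y z : V) (a b c : 'I_n) : K := x 0 a * y 0 b * z 0 c.

(* writing r = \sum_{(i,j)} x_(i,j) (x) y_(i,j) with x_(i,j) = r i j e_i, y_(i,j) = e_j *)
Definition r12_mul_r13 (mul : V -> V -> V) (r : 'M[K]_n) (a b c : 'I_n) : K :=
  \sum_(i < n) \sum_(j < n) \sum_(k < n) \sum_(l < n)
    t3 (mul (r i j *: bvec i) (r k l *: bvec k)) (bvec j) (bvec l) a b c.
Definition r13_prec_r23 (prec : V -> V -> V) (r : 'M[K]_n) (a b c : 'I_n) : K :=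
  \sum_(i < n) \sum_(j < n) \sum_(k < n) \sum_(l < n)
    t3 (r i j *: bvec i) (r k l *: bvec k) (prec (bvec j) (bvec l)) a b c.
Definition r23_succ_r12 (succ : V -> V -> V) (r : 'M[K]_n) (a b c : 'I_n) : K :=
  \sum_(i < n) \sum_(j < n) \sum_(k < n) \sum_(l < n)
    t3 (r k l *: bvec k) (succ (r i j *: bvec i) (bvec l)) (bvec j) a b c.

Definition D_equation (prec succ : V -> V -> V) (r : 'M[K]_n) : Prop :=
  forall a b c : 'I_n,
    r12_mul_r13 (fun x y => prec x y + succ x y) r a b c
    = r13_prec_r23 prec r a b c + r23_succ_r12 succ r a b c.

Notation W := (V * V)%type.

Definition Tr_mul (prec succ : V -> V -> V) (r : 'M[K]_n) (u v : W) : W :=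
  let mul x y := prec x y + succ x y in
  let: (x, a) := u in let: (y, b) := v in
  ((mul x y, 0)
  + (0, Rstar prec (rmap r a) b + Lstar succ (rmap r b) a)
  + (mul x (rmap r b) - rmap r (Rstar prec x b), Rstar prec x b)
  + (mul (rmap r a) y - rmap r (Lstar succ y a), Lstar succ y a))%R.

Definition semidirect_mul (prec succ : V -> V -> V) (u v : W) : W :=
  let: (x, a) := u in let: (y, b) := v in
  (prec x y + succ x y, Rstar prec x b + Lstar succ y a).

Definition omega (u v : W) : K := - pair_d v.2 u.1 + pair_d u.2 v.1.

Definition associative_alg (mul : W -> W -> W) : Prop :=
  forall u v w : W, mul (mul u v) w = mul u (mul v w).

Definition connes_cocycle (mul : W -> W -> W) (om : W -> W -> K) : Prop :=
  (forall u v : W, om u v = - om v u) /\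
  (forall u v w : W, om (mul u v) w + om (mul v w) u + om (mul w u) v = 0).

Definition alg_iso (mul1 mul2 : W -> W -> W) (phi : W -> W) : Prop :=
  [/\ forall (k : K) (u v : W), phi (k *: u + v) = k *: phi u + phi v,
      bijective phi &
      forall u v : W, phi (mul1 u v) = mul2 (phi u) (phi v)].

End Dend.

(* Main.v *)
Require Import Defs.
From HB Require Import structures.
From mathcomp Require Import all_boot all_order all_algebra.
From mathcomp Require Import ssrAC.
Import GRing.Theory.
Local Open Scope ring_scope.
Set Implicit Arguments. Unset Strict Implicit. Unset Printing Implicit Defensive.

Lemma bvecE (K : fieldType) (n : nat) (j i : 'I_n) : bvec K j 0 i = (i == j)%:R.
Proof. by rewrite /bvec mxE eqxx. Qed.

Lemma csumr (K : fieldType) (n : nat) (b : 'I_n) (G : 'I_n -> K) :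
  \sum_(j < n) G j * (j == b)%:R = G b.
Proof.
rewrite (bigD1 b) //= eqxx mulr1 big1 ?addr0 // => j /negbTE ->; by rewrite mulr0.
Qed.

Lemma csuml (K : fieldType) (n : nat) (b : 'I_n) (G : 'I_n -> K) :
  \sum_(j < n) (b == j)%:R * G j = G b.
Proof.
rewrite -[RHS](csumr b); apply: eq_bigr => j _; by rewrite mulrC eq_sym.
Qed.

Lemma bilE (K : fieldType) (n : nat) c (x y : 'rV[K]_n) m :
  bil c x y 0 m = \sum_(i < n) \sum_(j < n) x 0 i * y 0 j * c i j 0 m.
Proof.
rewrite /bil summxE; apply: eq_bigr => i _; rewrite summxE; apply: eq_bigr => j _.
by rewrite mxE.
Qed.

Lemma bil_lin_l (K : fieldType) (n : nat) c (k : K) (x y z : 'rV[K]_n) :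
  bil c (k *: x + y) z = k *: bil c x z + bil c y z.
Proof.
apply/rowP => m; rewrite !mxE !bilE mulr_sumr -big_split /=; apply: eq_bigr => i _.
rewrite mulr_sumr -big_split /=; apply: eq_bigr => j _.
by rewrite !mxE !mulrDl !mulrA.
Qed.

Lemma bil_lin_r (K : fieldType) (n : nat) c (k : K) (x y z : 'rV[K]_n) :
  bil c z (k *: x + y) = k *: bil c z x + bil c z y.
Proof.
apply/rowP => m; rewrite !mxE !bilE mulr_sumr -big_split /=; apply: eq_bigr => i _.
rewrite mulr_sumr -big_split /=; apply: eq_bigr => j _.
by rewrite !mxE mulrDr mulrDl !mulrA [z 0 i * k]mulrC.
Qed.

Definition lin (K : fieldType) (n : nat) (f : 'rV[K]_n -> 'rV[K]_n) :=
  forall (k : K) x y, f (k *: x + y) = k *: f x + f y.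
Definition linS (K : fieldType) (n : nat) (f : 'rV[K]_n -> K) :=
  forall (k : K) x y, f (k *: x + y) = k * f x + f y.


Lemma lin0 (K : fieldType) (n : nat) (f : 'rV[K]_n -> 'rV[K]_n) : lin f -> f 0 = 0.
Proof.
move=> H; have := H 1 0 0; rewrite !scale1r addr0 => E.
by apply: (@addrI _ (f 0)); rewrite addr0 -E.
Qed.
Lemma linD (K : fieldType) (n : nat) (f : 'rV[K]_n -> 'rV[K]_n) x y : lin f -> f (x + y) = f x + f y.
Proof. by move=> H; have := H 1 x y; rewrite !scale1r. Qed.
Lemma linZ (K : fieldType) (n : nat) (f : 'rV[K]_n -> 'rV[K]_n) k x : lin f -> f (k *: x) = k *: f x.
Proof. by move=> H; rewrite -[k *: x]addr0 H (lin0 H) addr0. Qed.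
Lemma linN (K : fieldType) (n : nat) (f : 'rV[K]_n -> 'rV[K]_n) x : lin f -> f (- x) = - f x.
Proof. by move=> H; rewrite -scaleN1r (linZ _ _ H) scaleN1r. Qed.
Lemma linB (K : fieldType) (n : nat) (f : 'rV[K]_n -> 'rV[K]_n) x y : lin f -> f (x - y) = f x - f y.
Proof. by move=> H; rewrite (linD _ _ H) (linN _ H). Qed.
Lemma lin_sum (K : fieldType) (n : nat) (f : 'rV[K]_n -> 'rV[K]_n) (g : 'I_n -> 'rV[K]_n) :
  lin f -> f (\sum_(i < n) g i) = \sum_(i < n) f (g i).
Proof.
move=> H; apply: (big_morph f (fun x y => linD x y H) (lin0 H)).
Qed.
Lemma lin_expand (K : fieldType) (n : nat) (f : 'rV[K]_n -> 'rV[K]_n) p :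
  lin f -> f p = \sum_(b < n) p 0 b *: f (bvec K b).
Proof.
move=> H; rewrite {1}(row_sum_delta p) (lin_sum _ H); apply: eq_bigr => b _.
by rewrite (linZ _ _ H).
Qed.

Lemma linS0 (K : fieldType) (n : nat) (f : 'rV[K]_n -> K) : linS f -> f 0 = 0.
Proof.
move=> H; have := H 1 0 0; rewrite !scale1r addr0 mul1r => E.
by apply: (@addrI _ (f 0)); rewrite addr0 -E.
Qed.
Lemma linSD (K : fieldType) (n : nat) (f : 'rV[K]_n -> K) x y : linS f -> f (x + y) = f x + f y.
Proof. by move=> H; have := H 1 x y; rewrite scale1r mul1r. Qed.
Lemma linSZ (K : fieldType) (n : nat) (f : 'rV[K]_n -> K) k x : linS f -> f (k *: x) = k * f x.
Proof. by move=> H; rewrite -[k *: x]addr0 H (linS0 H) addr0. Qed.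
Lemma linS_sum (K : fieldType) (n : nat) (f : 'rV[K]_n -> K) (g : 'I_n -> 'rV[K]_n) :
  linS f -> f (\sum_(i < n) g i) = \sum_(i < n) f (g i).
Proof.
move=> H; apply: (big_morph f (fun x y => linSD x y H) (linS0 H)).
Qed.
Lemma linS_expand (K : fieldType) (n : nat) (f : 'rV[K]_n -> K) p :
  linS f -> f p = \sum_(b < n) p 0 b * f (bvec K b).
Proof.
move=> H; rewrite {1}(row_sum_delta p) (linS_sum _ H); apply: eq_bigr => b _.
by rewrite (linSZ _ _ H).
Qed.
Lemma linS_comp (K : fieldType) (n : nat) (f : 'rV[K]_n -> 'rV[K]_n) (g : 'rV[K]_n -> K) :
  lin f -> linS g -> linS (fun x => g (f x)).
Proof. by move=> Hf Hg k x y; rewrite Hf Hg. Qed.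
Lemma lin_comp (K : fieldType) (n : nat) (f g : 'rV[K]_n -> 'rV[K]_n) :
  lin f -> lin g -> lin (fun x => g (f x)).
Proof. by move=> Hf Hg k x y; rewrite Hf Hg. Qed.
Lemma lin_add (K : fieldType) (n : nat) (f g : 'rV[K]_n -> 'rV[K]_n) :
  lin f -> lin g -> lin (fun x => f x + g x).
Proof.
move=> Hf Hg k x y; rewrite Hf Hg scalerDr.
by rewrite -!addrA; congr (_ + _); rewrite addrCA.
Qed.

Lemma bil_linl (K : fieldType) (n : nat) c (z : 'rV[K]_n) : lin (fun x => bil c x z).
Proof. by move=> k x y; rewrite bil_lin_l. Qed.
Lemma bil_linr (K : fieldType) (n : nat) c (z : 'rV[K]_n) : lin (fun x => bil c z x).
Proof. by move=> k x y; rewrite bil_lin_r. Qed.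

Lemma pair_linr (K : fieldType) (n : nat) (a : 'rV[K]_n) : linS (pair_d a).
Proof.
move=> k x y; rewrite /pair_d mulr_sumr -big_split /=; apply: eq_bigr => i _.
by rewrite !mxE mulrDr mulrCA.
Qed.
Lemma pair_dC (K : fieldType) (n : nat) (a x : 'rV[K]_n) : pair_d a x = pair_d x a.
Proof. by apply: eq_bigr => i _; rewrite mulrC. Qed.
Lemma pair_linl (K : fieldType) (n : nat) (x : 'rV[K]_n) : linS (fun a => pair_d a x).
Proof. by move=> k a b; rewrite /= !(pair_dC _ x) pair_linr. Qed.
Lemma pair_bvec (K : fieldType) (n : nat) (a : 'rV[K]_n) j : pair_d a (bvec K j) = a 0 j.
Proof. by rewrite /pair_d; under eq_bigr do rewrite bvecE; rewrite csumr. Qed.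
Lemma dual_ext (K : fieldType) (n : nat) (a b : 'rV[K]_n) :
  (forall w, pair_d a w = pair_d b w) -> a = b.
Proof. by move=> H; apply/rowP => j; rewrite -!pair_bvec H. Qed.

Lemma rmap_lin (K : fieldType) (n : nat) (r : 'M[K]_n) : lin (rmap r).
Proof.
move=> k x y; apply/rowP => i; rewrite !mxE mulr_sumr -big_split /=; apply: eq_bigr => j _.
by rewrite !mxE mulrDr mulrCA.
Qed.

Lemma pair_Rstar (K : fieldType) (n : nat) c (x a w : 'rV[K]_n) :
  pair_d (Rstar (bil c) x a) w = pair_d a (bil c w x).
Proof.
rewrite (linS_expand w (linS_comp (bil_linl c x) (pair_linr a))) /pair_d.
by apply: eq_bigr => j _; rewrite mxE mulrC.
Qed.
Lemma pair_Lstar (K : fieldType) (n : nat) c (x a w : 'rV[K]_n) :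
  pair_d (Lstar (bil c) x a) w = pair_d a (bil c x w).
Proof.
rewrite (linS_expand w (linS_comp (bil_linr c x) (pair_linr a))) /pair_d.
by apply: eq_bigr => j _; rewrite mxE mulrC.
Qed.

Lemma csumr2 (K : fieldType) (n : nat) (b : 'I_n) (G : 'I_n -> K) :
  \sum_(j < n) G j * (b == j)%:R = G b.
Proof. rewrite -[RHS](csumr b); apply: eq_bigr => j _; by rewrite eq_sym. Qed.

Lemma Rstar_lina (K : fieldType) (n : nat) c (x : 'rV[K]_n) : lin (Rstar (bil c) x).
Proof.
move=> k a b; apply: dual_ext => w.
by rewrite !(pair_linl, pair_Rstar).
Qed.
Lemma Lstar_lina (K : fieldType) (n : nat) c (x : 'rV[K]_n) : lin (Lstar (bil c) x).
Proof.
move=> k a b; apply: dual_ext => w.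
by rewrite !(pair_linl, pair_Lstar).
Qed.
Lemma Rstar_linx (K : fieldType) (n : nat) c (a : 'rV[K]_n) : lin (fun x => Rstar (bil c) x a).
Proof.
move=> k x y; apply: dual_ext => w.
by rewrite !(pair_linl, pair_Rstar) bil_lin_r pair_linr.
Qed.
Lemma Lstar_linx (K : fieldType) (n : nat) c (a : 'rV[K]_n) : lin (fun x => Lstar (bil c) x a).
Proof.
move=> k x y; apply: dual_ext => w.
by rewrite !(pair_linl, pair_Lstar) bil_lin_l pair_linr.
Qed.

Lemma csuml2 (K : fieldType) (n : nat) (b : 'I_n) (G : 'I_n -> K) :
  \sum_(j < n) (j == b)%:R * G j = G b.
Proof. rewrite -[RHS](csumr b); apply: eq_bigr => j _; by rewrite mulrC. Qed.

Lemma bil_bvec (K : fieldType) (n : nat) (c : 'I_n -> 'I_n -> 'rV[K]_n) (i k : 'I_n) : bil c (bvec K i) (bvec K k) = c i k.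
Proof.
apply/rowP => m; rewrite bilE.
under eq_bigr => i' _ do under eq_bigr => j _ do rewrite !bvecE -mulrA.
under eq_bigr => i' _ do rewrite -mulr_sumr.
by rewrite csuml2 csuml2.
Qed.

Lemma bil_sbvec (K : fieldType) (n : nat) (c : 'I_n -> 'I_n -> 'rV[K]_n) (i k : 'I_n) (s t : K) :
  bil c (s *: bvec K i) (t *: bvec K k) = (s * t) *: c i k.
Proof.
by rewrite (linZ _ _ (bil_linl c _)) (linZ _ _ (bil_linr c _)) bil_bvec scalerA mulrC.
Qed.

Lemma rmap_bvec (K : fieldType) (n : nat) (r : 'M[K]_n) (b i : 'I_n) : rmap r (bvec K b) 0 i = r i b.
Proof. by rewrite mxE; under eq_bigr do rewrite bvecE; rewrite csumr. Qed.
Lemma r12E (K : fieldType) (n : nat) (cp cs : 'I_n -> 'I_n -> 'rV[K]_n) r a b c :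
  r12_mul_r13 (fun x y => bil cp x y + bil cs x y) r a b c =
  \sum_(i < n) \sum_(k < n) r i b * r k c * (cp i k 0 a + cs i k 0 a).
Proof.
rewrite /r12_mul_r13 /t3.
under eq_bigr => i _ do under eq_bigr => j _ do under eq_bigr => k _ do
  under eq_bigr => l _ do rewrite !bil_sbvec !bvecE !mxE.
under eq_bigr => i _ do under eq_bigr => j _ do under eq_bigr => k _ do rewrite csumr2.
under eq_bigr => i _ do under eq_bigr => j _ do rewrite -mulr_suml.
under eq_bigr => i _ do rewrite csumr2.
by apply: eq_bigr => i _; apply: eq_bigr => k _; rewrite mulrDr.
Qed.
Lemma perm5 (K : fieldType) (x y z w v : K) : x * y * (z * w) * v = y * (w * (x * z * v)).
Proof. rewrite !mulrA [x * y]mulrC; congr (_ * _); rewrite -!mulrA; congr (_ * _); by rewrite mulrA mulrC. Qed.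

Lemma perm5' (K : fieldType) (x y z w v : K) : x * y * (z * w) * v = v * (y * (x * z * w)).
Proof. by rewrite mulrC; congr (_ * _); rewrite !mulrA [x * y]mulrC. Qed.

Lemma r13E (K : fieldType) (n : nat) (cp : 'I_n -> 'I_n -> 'rV[K]_n) r a b c :
  r13_prec_r23 (bil cp) r a b c = \sum_(j < n) \sum_(l < n) r a j * r b l * cp j l 0 c.
Proof.
rewrite /r13_prec_r23 /t3.
under eq_bigr => i _ do under eq_bigr => j _ do under eq_bigr => k _ do
  under eq_bigr => l _ do rewrite bil_bvec !mxE !eqxx !andTb perm5.
under eq_bigr => i _ do under eq_bigr => j _ do under eq_bigr => k _ do rewrite -mulr_sumr.
under eq_bigr => i _ do under eq_bigr => j _ do rewrite -mulr_sumr.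
under eq_bigr => i _ do rewrite -mulr_sumr.
rewrite csuml.
under eq_bigr => j _ do under eq_bigr => k _ do rewrite -mulr_sumr.
under eq_bigr => j _ do rewrite csuml.
done.
Qed.

Lemma r23E (K : fieldType) (n : nat) (cs : 'I_n -> 'I_n -> 'rV[K]_n) r a b c :
  r23_succ_r12 (bil cs) r a b c = \sum_(i < n) \sum_(l < n) r a l * r i c * cs i l 0 b.
Proof.
rewrite /r23_succ_r12 /t3.
under eq_bigr => i _ do under eq_bigr => j _ do under eq_bigr => k _ do
  under eq_bigr => l _ do rewrite (linZ _ _ (bil_linl cs _)) bil_bvec !mxE !eqxx !andTb.
under eq_bigr => i _ do under eq_bigr => j _ do under eq_bigr => k _ do
  under eq_bigr => l _ do rewrite perm5'.
under eq_bigr => i _ do under eq_bigr => j _ do under eq_bigr => k _ do rewrite -!mulr_sumr.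
under eq_bigr => i _ do under eq_bigr => j _ do rewrite -mulr_sumr csuml.
under eq_bigr => i _ do rewrite csuml.
done.
Qed.

Lemma bilE_bvecl (K : fieldType) (n : nat) (c : 'I_n -> 'I_n -> 'rV[K]_n) j (y : 'rV[K]_n) m :
  bil c (bvec K j) y 0 m = \sum_(l < n) y 0 l * c j l 0 m.
Proof.
rewrite bilE; under eq_bigr => i _ do under eq_bigr => l _ do rewrite bvecE -mulrA.
under eq_bigr => i _ do rewrite -mulr_sumr.
by rewrite csuml2.
Qed.
Lemma bilE_bvecr (K : fieldType) (n : nat) (c : 'I_n -> 'I_n -> 'rV[K]_n) j (x : 'rV[K]_n) m :
  bil c x (bvec K j) 0 m = \sum_(i < n) x 0 i * c i j 0 m.
Proof.
rewrite bilE; apply: eq_bigr => i _.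
under eq_bigr => l _ do rewrite bvecE mulrAC.
by rewrite csumr.
Qed.

Lemma Dbasis (K : fieldType) (n : nat) (cp cs : 'I_n -> 'I_n -> 'rV[K]_n) (r : 'M[K]_n) :
  symmetric_tensor r -> D_equation (bil cp) (bil cs) r -> forall b c,
  bil cp (rmap r (bvec K b)) (rmap r (bvec K c)) + bil cs (rmap r (bvec K b)) (rmap r (bvec K c)) =
  rmap r (Rstar (bil cp) (rmap r (bvec K b)) (bvec K c) + Lstar (bil cs) (rmap r (bvec K c)) (bvec K b)).
Proof.
move=> Hs HD b c; apply/rowP => m.
have rs : forall i j, r i j = r j i.
  by move=> i j; rewrite -{1}Hs mxE.
transitivity (r12_mul_r13 (fun x y => bil cp x y + bil cs x y) r m b c).
  rewrite r12E mxE !bilE -big_split /=; apply: eq_bigr => i _.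
  rewrite -big_split /=; apply: eq_bigr => k _.
  by rewrite !rmap_bvec mulrDr.
rewrite HD r13E r23E mxE.
have E : forall j, (Rstar (bil cp) (rmap r (bvec K b)) (bvec K c) + Lstar (bil cs) (rmap r (bvec K c)) (bvec K b)) 0 j = \sum_(l < n) r l b * cp j l 0 c + \sum_(i < n) r i c * cs i j 0 b.
  move=> j; rewrite !mxE pair_dC pair_bvec pair_dC pair_bvec bilE_bvecl bilE_bvecr.
  by congr (_ + _); apply: eq_bigr => i _; rewrite rmap_bvec.
rewrite (eq_bigr _ (fun j _ => congr1 (fun t => r m j * t) (E j))).
under eq_bigr => j _ do rewrite mulrDr.
rewrite big_split /=; congr (_ + _).
  apply: eq_bigr => j _; rewrite mulr_sumr; apply: eq_bigr => l _.
  by rewrite mulrA (rs l b).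
under [RHS]eq_bigr => j _ do rewrite mulr_sumr.
rewrite [RHS]exchange_big /=; apply: eq_bigr => i _; apply: eq_bigr => j _.
by rewrite mulrA.
Qed.

Lemma Did (K : fieldType) (n : nat) (cp cs : 'I_n -> 'I_n -> 'rV[K]_n) (r : 'M[K]_n) :
  symmetric_tensor r -> D_equation (bil cp) (bil cs) r -> forall p q,
  bil cp (rmap r p) (rmap r q) + bil cs (rmap r p) (rmap r q) =
  rmap r (Rstar (bil cp) (rmap r p) q + Lstar (bil cs) (rmap r q) p).
Proof.
move=> Hs HD p q.
have HF : lin (fun p => bil cp (rmap r p) (rmap r q) + bil cs (rmap r p) (rmap r q)).
  by apply: lin_add; apply: lin_comp (rmap_lin r) (bil_linl _ _).
have HG : lin (fun p => rmap r (Rstar (bil cp) (rmap r p) q + Lstar (bil cs) (rmap r q) p)).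
  apply: lin_comp (rmap_lin r).
  exact: lin_add (lin_comp (rmap_lin r) (Rstar_linx cp q)) (Lstar_lina cs (rmap r q)).
move: (lin_expand p HF) (lin_expand p HG) => /= -> ->; apply: eq_bigr => b _; congr (_ *: _).
have HF' : lin (fun q => bil cp (rmap r (bvec K b)) (rmap r q) + bil cs (rmap r (bvec K b)) (rmap r q)).
  by apply: lin_add; apply: lin_comp (rmap_lin r) (bil_linr _ _).
have HG' : lin (fun q => rmap r (Rstar (bil cp) (rmap r (bvec K b)) q + Lstar (bil cs) (rmap r q) (bvec K b))).
  apply: lin_comp (rmap_lin r).
  exact: lin_add (Rstar_lina cp _) (lin_comp (rmap_lin r) (Lstar_linx cs (bvec K b))).
move: (lin_expand q HF') (lin_expand q HG') => /= -> ->; apply: eq_bigr => c _; congr (_ *: _).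
exact: Dbasis.
Qed.

Lemma cyc6 (V : zmodType) (A B C D E F : V) :
  -(A+B)+(C+D) + (-(E+D)+(A+F)) + (-(C+F)+(E+B)) = 0.
Proof.
rewrite !opprD !addrA.
rewrite (ACl ((1*7)*(2*12)*(3*9)*(4*6)*(5*11)*(8*10)))%AC /=.
by rewrite !addNr ?addrN !addr0 ?subrr.
Qed.

Lemma bilDl (K : fieldType) (n : nat) (c : 'I_n -> 'I_n -> 'rV[K]_n) x y z :
  bil c (x + y) z = bil c x z + bil c y z.
Proof. exact: (linD _ _ (bil_linl c z)). Qed.
Lemma bilDr (K : fieldType) (n : nat) (c : 'I_n -> 'I_n -> 'rV[K]_n) x y z :
  bil c z (x + y) = bil c z x + bil c z y.
Proof. exact: (linD _ _ (bil_linr c z)). Qed.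
Lemma bilBl (K : fieldType) (n : nat) (c : 'I_n -> 'I_n -> 'rV[K]_n) x y z :
  bil c (x - y) z = bil c x z - bil c y z.
Proof. exact: (linB _ _ (bil_linl c z)). Qed.
Lemma bilBr (K : fieldType) (n : nat) (c : 'I_n -> 'I_n -> 'rV[K]_n) x y z :
  bil c z (x - y) = bil c z x - bil c z y.
Proof. exact: (linB _ _ (bil_linr c z)). Qed.
Lemma pair_dDl (K : fieldType) (n : nat) (a b w : 'rV[K]_n) :
  pair_d (a + b) w = pair_d a w + pair_d b w.
Proof. exact: (linSD _ _ (pair_linl w)). Qed.
Lemma pair_dDr (K : fieldType) (n : nat) (a b w : 'rV[K]_n) :
  pair_d w (a + b) = pair_d w a + pair_d w b.
Proof. exact: (linSD _ _ (pair_linr w)). Qed.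

Lemma sd_assoc (K : fieldType) (n : nat) (cp cs : 'I_n -> 'I_n -> 'rV[K]_n) :
  dendriform (bil cp) (bil cs) -> associative_alg (semidirect_mul (bil cp) (bil cs)).
Proof.
move=> Hd [x a] [y b] [z c] /=; congr pair.
  have [h1 h2 h3] := Hd x y z.
  by rewrite bilDl h1 h2 -h3 !bilDr !addrA.
apply: dual_ext => w; rewrite !pair_dDl !pair_Rstar !pair_Lstar !pair_dDl !pair_Rstar !pair_Lstar.
have [h1 _ _] := Hd w x y; have [_ h2 _] := Hd z w x; have [_ _ h3] := Hd y z w.
by rewrite h1 h2 h3 !addrA.
Qed.

Lemma sd_cocycle (K : fieldType) (n : nat) (cp cs : 'I_n -> 'I_n -> 'rV[K]_n) :
  connes_cocycle (semidirect_mul (bil cp) (bil cs)) (@omega K n).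
Proof.
split.
  by move=> [x a] [y b]; rewrite /omega /= opprD opprK addrC.
move=> [x a] [y b] [z c]; rewrite /omega /= !pair_dDl !pair_dDr !pair_Rstar !pair_Lstar.

exact: cyc6.
Qed.

Definition phiT (K : fieldType) (n : nat) (r : 'M[K]_n) (u : 'rV[K]_n * 'rV[K]_n) :
  'rV[K]_n * 'rV[K]_n := (u.1 - rmap r u.2, u.2).
Definition psiT (K : fieldType) (n : nat) (r : 'M[K]_n) (u : 'rV[K]_n * 'rV[K]_n) :
  'rV[K]_n * 'rV[K]_n := (u.1 + rmap r u.2, u.2).

Lemma zmod_aux (V : zmodType) (a b c t1 t2 e f t d : V) :
  a + b = e -> e + c = f - d -> t1 + t2 = t - d -> a + 0 + (b - t1) + (c - t2) = f - t.
Proof.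
move=> H1 H2 H3; rewrite addr0.
have -> : a + (b - t1) + (c - t2) = (a + b + c) - (t1 + t2).
  by rewrite opprD !addrA [LHS](ACl (1*2*4*3*5))%AC.
rewrite H1 H2 H3 opprB addrA subrK //.
Qed.

Lemma zmod_aux2 (V : zmodType) (p q r1 l1 : V) :
  r1 + l1 = 0 + (p + q) + (r1 - p) + (l1 - q).
Proof. by rewrite add0r !addrA [RHS](ACl ((1*4)*(2*6)*3*5))%AC /= !subrr !add0r. Qed.

Lemma pairD (K : fieldType) (n : nat) (a b c d : 'rV[K]_n) : (a, b) + (c, d) = (a + c, b + d).
Proof. by []. Qed.
Lemma pairZ (K : fieldType) (n : nat) (k : K) (a b : 'rV[K]_n) : k *: (a, b) = (k *: a, k *: b).
Proof. by []. Qed.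

Lemma phi_hom (K : fieldType) (n : nat) (cp cs : 'I_n -> 'I_n -> 'rV[K]_n) (r : 'M[K]_n) :
  symmetric_tensor r -> D_equation (bil cp) (bil cs) r -> forall u v,
  phiT r (semidirect_mul (bil cp) (bil cs) u v) =
  Tr_mul (bil cp) (bil cs) r (phiT r u) (phiT r v).
Proof.
move=> Hs HD [x a] [y b]; rewrite /phiT /Tr_mul /semidirect_mul /=.
have RB := fun u v w => linB u v (Rstar_linx cp w).
have LB := fun u v w => linB u v (Lstar_linx cs w).
simpl in RB, LB.
rewrite !pairD; congr pair; last first.
  by rewrite RB LB; apply: zmod_aux2.
rewrite /=.
have RD := fun u v => linD u v (rmap_lin r).
have RBm := fun u v => linB u v (rmap_lin r).
simpl in RD, RBm.
symmetry; apply: (@zmod_aux _ _ _ _ _ _ (bil cp (x - rmap r a) y + bil cs (x - rmap r a) y)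
   _ _ (bil cp (rmap r a) (rmap r b) + bil cs (rmap r a) (rmap r b))).
- rewrite !bilBr !addrA [LHS](ACl ((1*3)*((2*5)*(4*6))))%AC /=.
  by rewrite !addNr !addr0.
- rewrite !bilBl !bilBr !addrA opprD !addrA [LHS](ACl ((1*3*6*8)*((2*5)*(4*7))))%AC /=.
  by rewrite !addNr !addr0.
- rewrite (Did Hs HD) -RD -RBm RB LB; congr (rmap r _).
  rewrite opprD !addrA [LHS](ACl (1*3*2*4))%AC.
  done.
Qed.

Lemma pair_rmap_sym (K : fieldType) (n : nat) (r : 'M[K]_n) (a b : 'rV[K]_n) :
  symmetric_tensor r -> pair_d b (rmap r a) = pair_d a (rmap r b).
Proof.
move=> Hs; have rs : forall i j, r i j = r j i by move=> i j; rewrite -{1}Hs mxE.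
rewrite /pair_d.
transitivity (\sum_(i < n) \sum_(j < n) b 0 i * (r i j * a 0 j)).
  by apply: eq_bigr => i _; rewrite mxE mulr_sumr.
transitivity (\sum_(i < n) \sum_(j < n) a 0 i * (r i j * b 0 j)); last first.
  by apply: eq_bigr => i _; rewrite mxE mulr_sumr.
rewrite exchange_big /=; apply: eq_bigr => i _; apply: eq_bigr => j _.
by rewrite (rs j i) mulrCA [RHS]mulrCA [b 0 j * _]mulrC.
Qed.

Lemma phi_omega (K : fieldType) (n : nat) (r : 'M[K]_n) :
  symmetric_tensor r -> forall u v, omega (phiT r u) (phiT r v) = omega u v.
Proof.
move=> Hs [x a] [y b]; rewrite /omega /phiT /=.
have PB := fun u v w => linSD u (- v) (pair_linr w).
have PN := fun v w => linSZ (-1) v (pair_linr w).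
simpl in PB, PN.
rewrite !PB -!scaleN1r !PN !mulN1r (pair_rmap_sym a b Hs).
by rewrite opprB !addrA [LHS](ACl ((1*4)*2*3))%AC /= subrr add0r.
Qed.

Lemma phi_iso (K : fieldType) (n : nat) (cp cs : 'I_n -> 'I_n -> 'rV[K]_n) (r : 'M[K]_n) :
  symmetric_tensor r -> D_equation (bil cp) (bil cs) r ->
  alg_iso (semidirect_mul (bil cp) (bil cs)) (Tr_mul (bil cp) (bil cs) r) (phiT r).
Proof.
move=> Hs HD; split.
- move=> k [x a] [y b]; rewrite pairZ pairD /phiT /= pairZ pairD (rmap_lin r).
  congr pair; by rewrite scalerBr opprD !addrA [LHS](ACl (1*3*2*4))%AC.
- exists (psiT r) => [[x a]|[x a]]; rewrite /phiT /psiT /=.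
    by rewrite subrK.
  by rewrite addrK.
- exact: phi_hom.
Qed.

Lemma transport (K : fieldType) (n : nat) (m1 m2 : 'rV[K]_n * 'rV[K]_n -> 'rV[K]_n * 'rV[K]_n -> 'rV[K]_n * 'rV[K]_n) phi :
  alg_iso m1 m2 phi -> (forall u v, omega (phi u) (phi v) = omega u v) ->
  associative_alg m1 -> connes_cocycle m1 (@omega K n) ->
  associative_alg m2 /\ connes_cocycle m2 (@omega K n).
Proof.
move=> [_ [psi pK Kp] hom] Hom Ha [Hc1 Hc2].
have E : forall U V, m2 U V = phi (m1 (psi U) (psi V)).
  by move=> U V; rewrite hom !Kp.
split.
  by move=> U V W; rewrite !E !pK Ha.
split; first by move=> U V; rewrite -(Kp U) -(Kp V) !Hom.
move=> U V W; rewrite -(Kp U) -(Kp V) -(Kp W); move: (psi U) (psi V) (psi W) => u v w.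
by rewrite -!hom !Hom; apply: Hc2.
Qed.

Unset Implicit Arguments.
Theorem theorem4p4p16 (K : fieldType) (n : nat)
  (cprec csucc : 'I_n -> 'I_n -> 'rV[K]_n) (r : 'M[K]_n) :
  let prec := bil cprec in
  let succ := bil csucc in
  dendriform prec succ ->
  symmetric_tensor r ->
  D_equation prec succ r ->
  [/\ associative_alg (semidirect_mul prec succ),
      associative_alg (Tr_mul prec succ r),
      connes_cocycle (semidirect_mul prec succ) (@omega K n),
      connes_cocycle (Tr_mul prec succ r) (@omega K n) &
      exists phi : ('rV[K]_n * 'rV[K]_n)%type -> ('rV[K]_n * 'rV[K]_n)%type,
        alg_iso (semidirect_mul prec succ) (Tr_mul prec succ r) phi /\
        (forall u v, omega (phi u) (phi v) = omega u v)].
Proof.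
move=> prec succ Hd Hs HD.
have Ha := sd_assoc Hd.
have Hc := sd_cocycle cprec csucc.
have Hi := phi_iso Hs HD.
have Ho := phi_omega Hs.
have [Ta Tc] := transport Hi Ho Ha Hc.
split=> //; exists (phiT r); split=> //.
Qed.
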